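(* Let $i\ge 2$ be an integer and let $f^{[i]}_n$ ($n\ge 1$) be the $i$-Fibonacci words. Then for every $n\ge 1$, $$X^{[i]}\big(f^{[i]}_n\big)=f^{[i]}_{n+1}.$$
   Context: For an integer $i\ge 2$, the $i$-Fibonacci words are finite words over the alphabet $\{0,1\}$ defined by $f^{[i]}_1=0$, $f^{[i]}_2=0^{i-1}1$ (where $0^{i-1}$ denotes $i-1$ consecutive $0$'s), and $f^{[i]}_n=f^{[i]}_{n-1}f^{[i]}_{n-2}$ (concatenation) for $n\ge 3$. The substitution $X^{[i]}$ acts on words that are written as concatenations of the two blocks $0$ and $0^{i-1}1$. Such a decomposition, when it exists, is unique: each letter $1$ forms a block together with the $i-1$ zeros immediately preceding it, and every other $0$ is a block by itself. $X^{[i]}$ replaces each block independently: the block $0$ is replaced by $0^{i-1}1$, and the block $0^{i-1}1$ is replaced by $0^{i-1}10$. The result is again a concatenation of such blocks. In the statement, $X^{[i]}$ is applied to $f^{[i]}_n$ written in its block decomposition. *)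

(* Defs.v *)
From mathcomp Require Import all_boot.
Set Implicit Arguments. Unset Strict Implicit. Unset Printing Implicit Defensive.

(* Words over {0,1}: letter 0 is [false], letter 1 is [true]. *)
Definition word := seq bool.

(* i-Fibonacci words, indexed so that fib_word i 1 = f_1 = 0,
   fib_word i 2 = f_2 = 0^(i-1) 1, f_n = f_(n-1) f_(n-2). fib_word i 0 is an
   unused dummy value. *)
Fixpoint fib_aux (i : nat) (n : nat) : word * word :=
  (* returns (f_(n+1), f_(n+2)) *)
  match n with
  | 0 => ([:: false], rcons (nseq i.-1 false) true)
  | k.+1 => let: (a, b) := fib_aux i k in (b, b ++ a)
  end.

Definition fib_word (i n : nat) : word := (fib_aux i n.-1).1.

Definition block (i : nat) (b : bool) : word :=
  if b then rcons (nseq i.-1 false) true else [:: false].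

Definition spell (i : nat) (bs : seq bool) : word := flatten (map (block i) bs).

Definition X_block (i : nat) (b : bool) : word :=
  if b then rcons (rcons (nseq i.-1 false) true) false
  else rcons (nseq i.-1 false) true.

(* X^[i] applied to a word given by its block decomposition bs. *)
Definition X_sub (i : nat) (bs : seq bool) : word := flatten (map (X_block i) bs).
Example fib_test : fib_word 3 4 = [:: false;false;true;false;false;false;true] /\ fib_word 2 1 = [:: false].
Proof. by split. Qed.

(* Main.v *)
Require Import Defs.
From mathcomp Require Import all_boot.

Fixpoint baux (n : nat) : seq bool * seq bool :=
  match n with
  | 0 => ([:: false], [:: true])
  | k.+1 => let: (a, b) := baux k in (b, b ++ a)
  end.

Definition sigma (b : bool) : seq bool := if b then [:: true; false] else [:: true].

Lemma spell_cat i s t : spell i (s ++ t) = spell i s ++ spell i t.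
Proof. by rewrite /spell map_cat flatten_cat. Qed.

Lemma fib_aux_spell i n : fib_aux i n = (spell i (baux n).1, spell i (baux n).2).
Proof.
elim: n => [|n IH] /=; first by rewrite /spell /= !cats0.
rewrite IH; case: (baux n) => a b /=; by rewrite spell_cat.
Qed.

Lemma sigma_baux n : flatten (map sigma (baux n).1) = (baux n).2 /\
   flatten (map sigma (baux n).2) = (baux n).2 ++ (baux n).1.
Proof.
elim: n => [|n [IH1 IH2]] //=.
move: IH1 IH2; case: (baux n) => a b /= IH1 IH2; split => //.
by rewrite map_cat flatten_cat IH2 IH1.
Qed.

Lemma X_sub_spell i bs : X_sub i bs = spell i (flatten (map sigma bs)).
Proof.
elim: bs => [|b bs IH] //=.
rewrite /X_sub /= -/(X_sub i bs) IH spell_cat; congr (_ ++ _).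
by case: b; rewrite /spell /= ?cats0 // cats1.
Qed.

Lemma spell_no i r k w : k < i.-1 -> spell i r <> nseq k false ++ true :: w.
Proof.
elim: r k => [|b r IH] k hk /=; first by case: k hk.
rewrite /spell /= -/(spell i r).
case: b => /=.
- rewrite -cats1 -catA /=.
  have -> : i.-1 = k + (i.-1 - k) by rewrite subnKC // ltnW.
  rewrite nseqD -catA => /(congr1 (drop k)).
  rewrite !drop_size_cat ?size_nseq //.
  by move: hk; rewrite -subn_gt0; case: (i.-1 - k).
- case: k hk => [|k] hk //= [] /(IH k); apply; exact: ltnW.
Qed.

Lemma spell_inj i : 2 <= i -> injective (spell i).
Proof.
move=> hi; have ei : i.-1 = i.-2.+1 by case: i hi => [|[|i]].
elim=> [|b r IH] [|b' r'] //=.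
- by case: b' => //; rewrite /spell /= ei.
- by case: b => //; rewrite /spell /= ei.
rewrite /spell /= -/(spell i r) -/(spell i r').
case: b; case: b' => /=.
- rewrite -!cats1 -!catA => /(congr1 (drop (size (nseq i.-1 false)))).
  by rewrite !drop_size_cat //= => -[] /IH ->.
- rewrite ei -cats1 -catA /= => -[] /esym H; exfalso.
  by apply: (spell_no _ _ _ _ _ H); rewrite ei.
- rewrite ei -cats1 -catA /= => -[] H; exfalso.
  by apply: (spell_no _ _ _ _ _ H); rewrite ei.
- by move=> [] /IH ->.
Qed.

Theorem proposition2p2 (i n : nat) (hi : 2 <= i) (hn : 1 <= n) :
  (exists bs : seq bool, spell i bs = fib_word i n) /\
  (forall bs : seq bool, spell i bs = fib_word i n -> X_sub i bs = fib_word i n.+1).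
Proof.
case: n hn => [|m] // _.
rewrite /fib_word /= fib_aux_spell /=.
split; first by exists (baux m).1.
move=> bs /(spell_inj _ hi) ->.
rewrite X_sub_spell (proj1 (sigma_baux m)).
case: m => [|m] /=; first by rewrite /spell.
by [].
Qed.
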